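(* Fix an integer $l\ge -1$ and let $l_1=\lfloor\frac{l+1}{2}\rfloor$. Define \[H_l(x)=\sum_{k=-1}^{l}\ \sum_{\substack{\overline{x}\in\mathcal{Y}(k)\\ a(\overline{x})+b(\overline{x})-c(\overline{x})=2k+1-l}}\binom{x-3k-2}{k+1-a(\overline{x})-2b(\overline{x})},\] where $\binom{x-r}{s}$ denotes the polynomial $\frac{(x-r)(x-r-1)\cdots(x-r-s+1)}{s!}$ in $x$. Then $H_l(x)$ is a polynomial of degree $l_1$, and $l_1!\,H_l(x)$ is a monic polynomial with integer coefficients.
   Context: For $\overline{x}=(x_1,\ldots,x_t)\in\{1,2,3\}^t$ let $a(\overline{x})=\#\{i: x_i=2\}$, $b(\overline{x})=\#\{i: x_i=3\}$, and $c(\overline{x})=\#\{i\in[1,t]: \exists j_1,j_2\in[1,t],\ j_1+j_2=i,\ (x_{j_1},x_{j_2},x_i)=(1,1,2)\}$. For an integer $k\ge 0$, $\mathcal{Y}(k)$ is the set of tuples $\overline{x}\in\{1,2,3\}^{2k+1}$ such that (i) whenever $i_1,i_2,i_3\in[1,2k+1]$ satisfy $i_1+i_2=i_3$, $(x_{i_1},x_{i_2},x_{i_3})\ne(1,1,3)$, and (ii) $a(\overline{x})+2b(\overline{x})\le k+1$; $\mathcal{Y}(-1)=\{\emptyset\}$ consists of the empty tuple (with $a=b=c=0$). *)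

(* Defs.v *)
From HB Require Import structures.
From mathcomp Require Import all_boot all_order all_algebra.
Set Implicit Arguments. Unset Strict Implicit. Unset Printing Implicit Defensive.
Import Order.TTheory GRing.Theory Num.Theory.
Local Open Scope ring_scope.

(* A tuple xbar in {1,2,3}^t is encoded as t.-tuple 'I_3; the value at
   1-indexed position i+1 (i : 'I_t) is (tnth x i).+1. *)
Definition xval (t : nat) (x : t.-tuple 'I_3) (i : 'I_t) : nat := (tnth x i).+1.

Definition acnt (t : nat) (x : t.-tuple 'I_3) : nat := #|[set i | xval x i == 2%N]|.
Definition bcnt (t : nat) (x : t.-tuple 'I_3) : nat := #|[set i | xval x i == 3%N]|.

Definition ccnt (t : nat) (x : t.-tuple 'I_3) : nat :=
  #|[set i : 'I_t | [exists j1 : 'I_t, exists j2 : 'I_t,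
        [&& (j1.+1 + j2.+1 == i.+1)%N, xval x j1 == 1%N, xval x j2 == 1%N
          & xval x i == 2%N]]]|.

Definition no113 (t : nat) (x : t.-tuple 'I_3) : bool :=
  [forall i1 : 'I_t, forall i2 : 'I_t, forall i3 : 'I_t,
     (i1.+1 + i2.+1 == i3.+1)%N ==>
       ~~ [&& xval x i1 == 1%N, xval x i2 == 1%N & xval x i3 == 3%N]].

(* length of tuples in Y(k): 2k+1 for k >= 0, and 0 for k = -1
   (Y(-1) = {empty tuple}); only k >= -1 is ever used. *)
Definition Ylen (k : int) : nat :=
  match k with Posz m => (2 * m + 1)%N | Negz _ => 0%N end.

(* membership in Y(k) for k >= 0; for k = -1 (Ylen = 0) it holds for the
   unique empty tuple, matching Y(-1) = {empty}. *)
Definition inY (k : int) (x : (Ylen k).-tuple 'I_3) : bool :=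
  no113 x && ((acnt x)%:Z + 2 * (bcnt x)%:Z <= k + 1).

(* binomial polynomial binom(x - r, s) = (x-r)(x-r-1)...(x-r-s+1)/s! ;
   zero for negative s (never used in the sum below). *)
Definition binpoly (r s : int) : {poly rat} :=
  match s with
  | Posz m => ((m`!)%:R^-1 : rat) *: \prod_(i < m) ('X - ((r + i%:Z)%:~R)%:P)
  | Negz _ => 0
  end.

(* k ranges over -1, 0, ..., l *)
Definition krange (l : int) : seq int := [seq (i%:Z - 1) | i <- iota 0 (absz (l + 2))].

Definition H (l : int) : {poly rat} :=
  \sum_(k <- krange l)
    \sum_(x : (Ylen k).-tuple 'I_3 |
            inY x && ((acnt x)%:Z + (bcnt x)%:Z - (ccnt x)%:Z == 2 * k + 1 - l))
      binpoly (3 * k + 2) (k + 1 - (acnt x)%:Z - 2 * (bcnt x)%:Z).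

(* Main.v *)
Require Import Defs.
From HB Require Import structures.
From mathcomp Require Import all_boot all_order all_algebra zify.
Import Order.TTheory GRing.Theory Num.Theory.
Local Open Scope ring_scope.


Lemma pOM (p q: {poly rat}) : p \is a polyOver Num.int -> q \is a polyOver Num.int -> p * q \is a polyOver Num.int.
Proof.
move=> /polyOverP hp /polyOverP hq; apply/polyOverP => i; rewrite coefM.
by apply: rpred_sum => j _; apply: rpredM.
Qed.
Lemma pOD (p q: {poly rat}) : p \is a polyOver Num.int -> q \is a polyOver Num.int -> p + q \is a polyOver Num.int.
Proof.
move=> /polyOverP hp /polyOverP hq; apply/polyOverP => i; rewrite coefD.
by apply: rpredD.
Qed.
Lemma pOB (p q: {poly rat}) : p \is a polyOver Num.int -> q \is a polyOver Num.int -> p - q \is a polyOver Num.int.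
Proof.
move=> /polyOverP hp /polyOverP hq; apply/polyOverP => i; rewrite coefB.
by apply: rpredB.
Qed.
Lemma pOZ c (p: {poly rat}) : c \is a Num.int -> p \is a polyOver Num.int -> c *: p \is a polyOver Num.int.
Proof.
move=> hc /polyOverP hp; apply/polyOverP => i; rewrite coefZ.
by apply: rpredM.
Qed.
Lemma pOX : ('X : {poly rat}) \is a polyOver Num.int.
Proof. by apply/polyOverP => i; rewrite coefX; case: (_ == _). Qed.
Lemma pOC c : (c%:P : {poly rat}) \is a polyOver Num.int = (c \is a Num.int).
Proof. exact: polyOverC. Qed.

Lemma prodQ_size n (r : int) :
  size (\prod_(i < n) ('X - ((r + i%:Z)%:~R)%:P) : {poly rat}) = n.+1.
Proof. by rewrite size_prod_XsubC /index_enum unlock -enumT size_enum_ord. Qed.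

Lemma prodQ_monic n (r : int) :
  (\prod_(i < n) ('X - ((r + i%:Z)%:~R)%:P) : {poly rat}) \is monic.
Proof. exact: monic_prod_XsubC. Qed.

Lemma prodQ_int n (r : int) :
  (\prod_(i < n) ('X - ((r + i%:Z)%:~R)%:P) : {poly rat}) \is a polyOver Num.int.
Proof.
apply: (big_ind (fun p : {poly rat} => p \is a polyOver Num.int)).
- by rewrite pOC rpred1.
- by move=> p q hp hq; apply: pOM.
- by move=> i _; rewrite pOB ?pOX // pOC rpred_int.
Qed.

Lemma binpoly_size r n : size (binpoly r (Posz n)) = n.+1.
Proof.
rewrite /binpoly size_scale ?prodQ_size //.
by rewrite invr_eq0 pnatr_eq0 -lt0n fact_gt0.
Qed.

Lemma binpoly_lead r n : lead_coef (binpoly r (Posz n)) = (n`!)%:R^-1.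
Proof.
by rewrite /binpoly lead_coefZ (monicP (prodQ_monic _ _)) mulr1.
Qed.

Lemma binpoly_coef r n m : (n <= m)%N ->
  (binpoly r (Posz n))`_m = if n == m then (m`!)%:R^-1 else 0.
Proof.
move=> hnm; case: eqP => [<-|hne].
  by rewrite -(binpoly_lead r) lead_coefE binpoly_size.
by apply: nth_default; rewrite binpoly_size; lia.
Qed.

Lemma binpoly_int r n m : (n <= m)%N ->
  (m`!)%:R *: binpoly r (Posz n) \is a polyOver Num.int.
Proof.
move=> hnm; rewrite /binpoly scalerA -natr_div ?unitfE ?pnatr_eq0 -?lt0n ?fact_gt0 //.
  by apply: pOZ; rewrite ?rpred_nat ?prodQ_int.
have e : (m - (m - n) = n)%N by lia.
rewrite -(ffact_fact (leq_subr n m)) e; exact: dvdn_mull.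
Qed.
Definition x0 (e : bool) (n : nat) : n.-tuple 'I_3 :=
  [tuple (if e && (val i == 0%N) then (inord 1 : 'I_3) else ord0) | i < n].

Lemma xval_x0 e n (i : 'I_n) :
  xval (x0 e n) i = if e && (val i == 0%N) then 2%N else 1%N.
Proof. by rewrite /xval /x0 tnth_mktuple; case: ifP => // _; rewrite inordK. Qed.

Lemma x0_b e n : bcnt (x0 e n) = 0%N.
Proof.
apply/eqP; rewrite cards_eq0; apply/eqP/setP => i; rewrite !inE xval_x0.
by case: ifP.
Qed.

Lemma x0_c e n : ccnt (x0 e n) = 0%N.
Proof.
apply/eqP; rewrite cards_eq0; apply/eqP/setP => i; rewrite !inE.
apply/negbTE/existsP => -[j1 /existsP [j2 /and4P [/eqP h _ _]]].
rewrite xval_x0; case: ifP => // /andP [_ /eqP hi] _; simpl in *; lia.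
Qed.

Lemma x0_a e n : (0 < n)%N -> acnt (x0 e n) = e.
Proof.
move=> hn; rewrite /acnt.
have -> : [set i | xval (x0 e n) i == 2%N] = if e then [set Ordinal hn] else set0.
  apply/setP => i; rewrite !inE xval_x0; case: e => /=.
    rewrite inE; case: (@eqP _ (val i) 0%N) => h /=; apply/esym.
      by apply/eqP/val_inj.
    by apply/negbTE/negP => /eqP/(congr1 val) /=.
  by rewrite inE.
by case: e; rewrite ?cards1 ?cards0.
Qed.

Lemma x0_no113 e n : no113 (x0 e n).
Proof.
apply/forallP => i1; apply/forallP => i2; apply/forallP => i3; apply/implyP => _.
rewrite !xval_x0; case: ifP => _; case: ifP => _; case: ifP => _; by [] .
Qed.

Lemma uniq_spec (e : bool) t (x : t.-tuple 'I_3) :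
  bcnt x = 0%N -> ccnt x = 0%N -> acnt x = e -> x = x0 e t.
Proof.
move=> hb hc ha.
have nb i : xval x i != 3%N.
  apply/negP => h; move/eqP: hb; rewrite cards_eq0 => /eqP/setP/(_ i).
  by rewrite !inE h.
have val1 i : xval x i != 2%N -> val (tnth x i) = 0%N.
  move=> h2; move: (nb i) h2; rewrite /xval /=; have := ltn_ord (tnth x i); lia.
case: e ha => ha.
- move/eqP: ha; case/cards1P => i0 hi0.
  have h2 i : (xval x i == 2%N) = (i == i0).
    by move/setP: hi0 => /(_ i); rewrite !inE.
  have hi00 : val i0 = 0%N.
    apply/eqP; apply/negP => hne.
    have ht : (0 < t)%N by have := ltn_ord i0; move: hne => /=; lia.
    have hj2 : ((val i0).-1 < t)%N by have := ltn_ord i0; move: hne => /=; lia.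
    move/eqP: hc; rewrite cards_eq0 => /eqP/setP/(_ i0); rewrite !inE.
    have h20 : xval x i0 == 2%N by rewrite h2.
    move=> /negbT/negP; apply; apply/existsP; exists (Ordinal ht).
    apply/existsP; exists (Ordinal hj2); apply/and4P; split => //.
    + by rewrite /=; apply/eqP; move: hne => /=; lia.
    + have : xval x (Ordinal ht) != 2%N.
        by rewrite h2; apply/negP => /eqP/(congr1 val) /=; move: hne => /=; lia.
      by move/val1; rewrite /xval => ->.
    + have : xval x (Ordinal hj2) != 2%N.
        by rewrite h2; apply/negP => /eqP/(congr1 val) /=; move: hne => /=; lia.
      by move/val1; rewrite /xval => ->.
  apply: eq_from_tnth => i; rewrite /x0 tnth_mktuple /=.
  case: ifP => hi.
    have : xval x i == 2%N by rewrite h2; apply/eqP/val_inj => /=; move/eqP: hi; move: hi00 => /=; lia.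
    by rewrite /xval => /eqP [] h; apply: val_inj; rewrite /= h inordK.
  apply: val_inj => /=; apply: val1; rewrite h2; apply/negP => /eqP hi'.
  by move: hi; rewrite hi' hi00.
- have h2 i : xval x i != 2%N.
    apply/negP => h; move/eqP: ha; rewrite cards_eq0 => /eqP/setP/(_ i).
    by rewrite !inE h.
  apply: eq_from_tnth => i; rewrite /x0 tnth_mktuple /=.
  by apply: val_inj => /=; apply: val1.
Qed.

Definition Pk (l k : int) (x : (Ylen k).-tuple 'I_3) : bool :=
  inY x && ((acnt x)%:Z + (bcnt x)%:Z - (ccnt x)%:Z == 2 * k + 1 - l).
Definition sk (k : int) (x : (Ylen k).-tuple 'I_3) : int :=
  k + 1 - (acnt x)%:Z - 2 * (bcnt x)%:Z.
Arguments sk {k} x.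

Lemma c_le_a t (x : t.-tuple 'I_3) : (ccnt x <= acnt x)%N.
Proof.
apply: subset_leq_card; apply/subsetP => i; rewrite !inE.
by case/existsP => j1 /existsP [j2 /and4P [_ _ _ ->]].
Qed.

Lemma key l k x : Pk l k x ->
  l + 1 - 2 * sk x = (acnt x)%:Z + 3 * (bcnt x)%:Z + (ccnt x)%:Z.
Proof. by case/andP => _ /eqP h; rewrite /sk; lia. Qed.

Arguments key {l k x}.

Lemma bound l (L : nat) k x n : l + 1 = L%:Z -> Pk l k x -> sk x = Posz n ->
  (n <= L./2)%N.
Proof.
move=> hL hP hs; have h0 := key hP; rewrite hs in h0; move: hL h0.
have := odd_double_half L; move: (odd L) (L./2) => e m he; subst L.
case: e => /= hL h0; rewrite -?muln2 in hL; lia.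
Qed.

Arguments bound {l L k x n}.

Lemma spec_char l (L : nat) k x : l + 1 = L%:Z -> Pk l k x -> sk x = (L./2)%:Z ->
  [/\ bcnt x = 0%N, ccnt x = 0%N, acnt x = odd L
    & k = (L./2)%:Z - 1 + (odd L)%:Z].
Proof.
move=> hL hP hs; have h0 := key hP; move: hP => /andP [_ /eqP h1].
rewrite /sk in hs h0; have h2 := c_le_a _ x; move: hL hs h0 h1 h2.
have := odd_double_half L; move: (odd L) (L./2) => e m he; subst L.
case: e => /= hL hs h0 h1 h2; rewrite -?muln2 in hL; split; lia.
Qed.

Arguments spec_char {l L k x}.

Lemma Ylen_pos k : 0 <= k -> (0 < Ylen k)%N.
Proof. by case: k => // n _ /=; lia. Qed.

Lemma cardC l (L : nat) k : l + 1 = L%:Z ->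
  #|[pred x : (Ylen k).-tuple 'I_3 | Pk l k x && (sk x == (L./2)%:Z)]| =
  (k == (L./2)%:Z - 1 + (odd L)%:Z) :> nat.
Proof.
move=> hL; set K := (L./2)%:Z - 1 + (odd L)%:Z.
case: (@eqP _ k K) => hk.
  subst k.
  have E : [pred x : (Ylen K).-tuple 'I_3 | Pk l K x && (sk x == (L./2)%:Z)]
      =i pred1 (x0 (odd L) (Ylen K)).
    move=> x; rewrite !inE.
    apply/idP/idP.
      case/andP => hP /eqP hs; have [hb hc ha _] := spec_char hL hP hs.
      by apply/eqP; apply: uniq_spec.
    move/eqP => ->.
    have hpos : (odd L -> 0 < Ylen K)%N.
      move=> ho; apply: Ylen_pos; move: ho; rewrite /K; case: (odd L) => // _; lia.
    have ha : acnt (x0 (odd L) (Ylen K)) = odd L.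
      by case ho : (odd L); [rewrite x0_a //; exact: hpos | rewrite /acnt; apply/eqP;
        rewrite cards_eq0; apply/eqP/setP => i; rewrite !inE xval_x0].
    rewrite /Pk /sk /inY x0_no113 ha x0_b x0_c /= /K.
    clear ha hpos x; clear K.
    have := odd_double_half L; move: (odd L) (L./2) hL => e m hL he; subst L.
    rewrite -?muln2 in hL; case: e hL => /= hL;
      repeat (apply/andP; split); try apply/eqP; lia.
  by rewrite (eq_card1 E).
apply: eq_card0 => x; rewrite !inE; apply/negP => /andP [hP /eqP hs].
by have [_ _ _ hk'] := spec_char hL hP hs.
Qed.

Lemma sum_krange l (L : nat) : l + 1 = L%:Z ->
  (\sum_(k <- krange l) (k == ((L./2)%:Z - 1 + (odd L)%:Z)%R) : nat)%N = 1%N.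
Proof.
move=> hL; set K := (L./2)%:Z - 1 + (odd L)%:Z.
have -> : (\sum_(k <- krange l) (k == K) : nat)%N = count_mem K (krange l).
  by elim: (krange l) => [|a r IH]; rewrite ?big_nil ?big_cons //= IH eq_sym.
rewrite count_uniq_mem.
  apply/eqP; rewrite eqb1; apply/mapP; exists (L./2 + odd L)%N.
    rewrite mem_iota /= add0n.
    clear K; have := odd_double_half L; move: (odd L) (L./2) hL => e m hL he; subst L.
    rewrite -?muln2 in hL; case: e hL => /= hL; lia.
  by rewrite /K; lia.
rewrite map_inj_uniq ?iota_uniq // => i j h; lia.
Qed.

Definition term k (x : (Ylen k).-tuple 'I_3) : {poly rat} :=
  binpoly (3 * k + 2) (sk x).
Arguments term {k} x.

Lemma term_size l (L : nat) k x : l + 1 = L%:Z -> Pk l k x ->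
  (size (term x) <= (L./2).+1)%N.
Proof.
move=> hL hP; rewrite /term; case E: (sk x) => [n|n].
  by rewrite binpoly_size ltnS (bound hL hP E).
by rewrite /binpoly size_poly0.
Qed.

Lemma term_coef l (L : nat) k x : l + 1 = L%:Z -> Pk l k x ->
  (term x)`_(L./2) = if sk x == (L./2)%:Z then ((L./2)`!)%:R^-1 else 0.
Proof.
move=> hL hP; rewrite /term; case E: (sk x) => [n|n].
  by rewrite binpoly_coef ?(bound hL hP E) // eqz_nat.
by rewrite /binpoly coef0.
Qed.

Lemma term_int l (L : nat) k x : l + 1 = L%:Z -> Pk l k x ->
  ((L./2)`!)%:R *: term x \is a polyOver Num.int.
Proof.
move=> hL hP; rewrite /term; case E: (sk x) => [n|n].
  by apply: binpoly_int; apply: (bound hL hP E).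
by rewrite /binpoly scaler0 pOC rpred0.
Qed.

Arguments term_size {l L k x}.
Arguments term_coef {l L k x}.
Arguments term_int {l L k x}.
Arguments sum_krange {l L}.
Arguments cardC {l L} k.

Theorem proposition8p11 (l : int) (hl : -1 <= l) :
  let l1 := (absz (l + 1))./2 in
  size (H l) = l1.+1 /\
  ((l1`!)%:R *: H l) \is monic /\
  ((l1`!)%:R *: H l) \is a polyOver Num.int.
Proof.
move=> l1.
have HE : H l = \sum_(k <- krange l) \sum_(x : (Ylen k).-tuple 'I_3 | Pk l k x) term x by [].
set L := absz (l + 1).
have hL : l + 1 = L%:Z by rewrite /L; lia.
have Hsz : (size (H l) <= l1.+1)%N.
  rewrite HE; apply: (big_ind (fun p : {poly rat} => (size p <= l1.+1)%N)).
  - by rewrite size_poly0.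
  - by move=> p q hp hq; apply: leq_trans (size_add _ _) _; rewrite geq_max hp hq.
  move=> k _; apply: (big_ind (fun p : {poly rat} => (size p <= l1.+1)%N)).
  - by rewrite size_poly0.
  - by move=> p q hp hq; apply: leq_trans (size_add _ _) _; rewrite geq_max hp hq.
  move=> x hP; rewrite /l1 -/L; exact: (term_size hL hP).
have Hc : (H l)`_l1 = (l1`!)%:R^-1.
  rewrite HE coef_sum.
  rewrite (eq_bigr (fun k => ((l1`!)%:R^-1 : rat) *+
     (k == (L./2)%:Z - 1 + (odd L)%:Z))); last first.
    move=> k _; rewrite coef_sum.
    rewrite (eq_bigr (fun x => if sk x == (L./2)%:Z then ((L./2)`!)%:R^-1 else 0));
      last by move=> x hP; apply: (term_coef hL hP).
    rewrite -big_mkcondr /= sumr_const -(cardC k hL).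
    done.
  by rewrite sumrMnr (sum_krange hL).
have Hc0 : (H l)`_l1 != 0 by rewrite Hc invr_eq0 pnatr_eq0 -lt0n fact_gt0.
have Hs : size (H l) = l1.+1.
  apply/eqP; rewrite eqn_leq Hsz /=; rewrite ltnNge; apply/negP => h.
  by move: Hc0; rewrite nth_default.
split => //; split.
  rewrite monicE lead_coefZ lead_coefE Hs /= Hc mulfV //.
  by rewrite pnatr_eq0 -lt0n fact_gt0.
rewrite HE scaler_sumr.
apply: (big_ind (fun p : {poly rat} => p \is a polyOver Num.int)).
- by rewrite pOC rpred0.
- by move=> p q; apply: pOD.
move=> k _; rewrite scaler_sumr.
apply: (big_ind (fun p : {poly rat} => p \is a polyOver Num.int)).
- by rewrite pOC rpred0.
- by move=> p q; apply: pOD.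
by move=> x hP; apply: (term_int hL hP).
Qed.
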